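(* Let $w_1,\dots,w_n\in\mathbb{R}^3$ be vectors whose projections $u_k=\pi(w_k)$ to the $xy$-plane satisfy $u_1+\dots+u_n=0$. Then there is an ordering $\sigma$ of the vectors such that every embedded realization of $(u_1,\dots,u_n)$ in the order $\sigma$ is the unknot.
   Context: Let $\pi:\mathbb{R}^3\to\mathbb{R}^2$, $(x,y,z)\mapsto(x,y)$, be the projection to the $xy$-plane. Let $u_1,\dots,u_n\in\mathbb{R}^2$ have sum $0$ and let $\sigma$ be a permutation of $\{1,\dots,n\}$. A realization of these vectors in the order $\sigma$ is a closed polygonal curve in $\mathbb{R}^3$ with vertices $p_0,p_1,\dots,p_n=p_0$ such that $\pi(p_k-p_{k-1})=u_{\sigma(k)}$ for $k=1,\dots,n$. Equivalently, the vectors are placed tip-to-tail in the plane in the order $\sigma$, and heights ($z$-coordinates) are chosen arbitrarily for the vertices. A realization is embedded if it is a simple closed curve, in which case it is a knot. *)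

(* Defs.v *)
From HB Require Import structures.
From mathcomp Require Import all_boot all_order all_algebra all_fingroup.
From mathcomp Require Import reals.
From Stdlib Require Import Relations.
Set Implicit Arguments. Unset Strict Implicit. Unset Printing Implicit Defensive.
Import Order.TTheory GRing.Theory Num.Theory.
Local Open Scope ring_scope.

Section Knots.
Variable R : realType.

Definition proj_xy (w : 'rV[R]_3) : 'rV[R]_2 :=
  \row_(i < 2) w 0 (widen_ord (isT : (2 <= 3)%N) i).

(* A closed polygonal curve is given by its cyclic list of vertices
   P = [p_0; ...; p_(m-1)], with edges p_i -> p_((i+1) mod m). *)
Definition vtx (P : seq 'rV[R]_3) (i : nat) : 'rV[R]_3 := nth 0 P (i %% size P).

Definition on_edge (P : seq 'rV[R]_3) (i : nat) (s : R) : 'rV[R]_3 :=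
  vtx P i + s *: (vtx P i.+1 - vtx P i).

Definition on_curve (P : seq 'rV[R]_3) (x : 'rV[R]_3) : Prop :=
  exists i s, (i < size P)%N /\ 0 <= s <= 1 /\ x = on_edge P i s.

(* embedded = simple closed curve: the piecewise-linear parametrization
   [0, m) -> R^3 is injective (and the curve is nonempty). *)
Definition simple_polygon (P : seq 'rV[R]_3) : Prop :=
  (0 < size P)%N /\
  forall i j s t, (i < size P)%N -> (j < size P)%N ->
    0 <= s < 1 -> 0 <= t < 1 -> on_edge P i s = on_edge P j t -> i = j /\ s = t.

Definition in_segment (a b x : 'rV[R]_3) : Prop :=
  exists s, 0 <= s <= 1 /\ x = a + s *: (b - a).

Definition in_triangle (a b c x : 'rV[R]_3) : Prop :=
  exists l1 l2 l3, 0 <= l1 /\ 0 <= l2 /\ 0 <= l3 /\ l1 + l2 + l3 = 1 /\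
    x = l1 *: a + l2 *: b + l3 *: c.

(* Reidemeister's elementary (Delta-) move: replace the edge [a,b] by the two
   edges [a,c],[c,b], where the triangle abc meets the knot only in [a,b]. *)
Definition delta_move (P Q : seq 'rV[R]_3) : Prop :=
  exists a b c rest, P = a :: b :: rest /\ Q = a :: c :: b :: rest /\
    forall x, in_triangle a b c x -> on_curve P x -> in_segment a b x.

Definition poly_step (P Q : seq 'rV[R]_3) : Prop :=
  simple_polygon P /\ simple_polygon Q /\
  ((exists k, Q = rot k P) \/ delta_move P Q \/ delta_move Q P).

(* a polygonal knot is the unknot iff it is combinatorially equivalent
   to a (nondegenerate) triangle *)
Definition is_unknot (P : seq 'rV[R]_3) : Prop :=
  exists T, size T = 3%N /\ simple_polygon T /\ clos_refl_sym_trans _ poly_step P T.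

(* Realization of (u_1..u_n) in the order sigma, with starting planar point c
   and heights h: vertex k (k = 0..n-1) is
   (c + u_(sigma 0) + ... + u_(sigma (k-1)), h k). *)
Definition realization_vertex (n : nat) (u : 'I_n -> 'rV[R]_2) (sigma : 'S_n)
  (c : 'rV[R]_2) (h : 'I_n -> R) (k : 'I_n) : 'rV[R]_3 :=
  \row_(i < 3) (if (i < 2)%N
                then (c + \sum_(j < n | (j < k)%N) u (sigma j)) 0 (inord i)
                else h k).

Definition realization (n : nat) (u : 'I_n -> 'rV[R]_2) (sigma : 'S_n)
  (c : 'rV[R]_2) (h : 'I_n -> R) : seq 'rV[R]_3 :=
  [seq realization_vertex u sigma c h k | k <- enum 'I_n].

End Knots.

(* Main.v *)
Require Import Defs.
From HB Require Import structures.
From mathcomp Require Import all_boot all_order all_algebra all_fingroup.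
From mathcomp Require Import reals.
From mathcomp Require Import ring lra zify.
From Stdlib Require Import Relations.
Set Implicit Arguments. Unset Strict Implicit. Unset Printing Implicit Defensive.
Import Order.TTheory GRing.Theory Num.Theory.
Local Open Scope ring_scope.


Section Plane.
Variable R : realType.
Implicit Types a b c v : R * R.

Definition cross a b : R := a.1 * b.2 - a.2 * b.1.

Definition upper a : bool := (0 < a.2) || ((a.2 == 0) && (0 < a.1)).
Definition grp a : nat := if upper a then 0%N else if (a.1 != 0) || (a.2 != 0) then 1%N else 2%N.
Definition le a b : bool := (grp a < grp b)%N || ((grp a == grp b) && (0 <= cross a b)).

Lemma crossC a b : cross a b = - cross b a.
Proof. rewrite /cross; ring. Qed.

Lemma cross_id a b c :
  (cross a b * c.1 + cross b c * a.1 + cross c a * b.1 = 0) /\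
  (cross a b * c.2 + cross b c * a.2 + cross c a * b.2 = 0).
Proof. rewrite /cross; split; ring. Qed.

Lemma grp_cases a :
  [/\ grp a = 0%N -> (0 < a.2) \/ (a.2 = 0 /\ 0 < a.1),
      grp a = 1%N -> (a.2 < 0) \/ (a.2 = 0 /\ a.1 < 0) &
      grp a = 2%N -> a.1 = 0 /\ a.2 = 0].
Proof.
rewrite /grp; case U: (upper a).
- split => // _; move: U; rewrite /upper => /orP[h|/andP[/eqP h1 h2]]; [by left|by right].
- move: U; rewrite /upper => /negbT; rewrite negb_or negb_and -leNgt => /andP[h1 h2].
  case: ifP => H; split => // _.
  + case/orP: H => H.
    * case: (eqVneq a.2 0) => E; last by left; rewrite lt_neqAle E h1.
      right; split => //; move: h2; rewrite E eqxx /= -leNgt le_eqVlt (negbTE H) //.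
    * by left; rewrite lt_neqAle H h1.
  + by move: H => /negbT; rewrite negb_or !negbK => /andP[/eqP -> /eqP ->].
Qed.

Lemma grp_le2 a : (grp a <= 2)%N.
Proof. by rewrite /grp; case: ifP => //; case: ifP. Qed.

Lemma grp2 a : grp a = 2%N -> (forall b, cross a b = 0) /\ (forall b, cross b a = 0).
Proof.
move=> H; have [_ _ /(_ H) [h1 h2]] := grp_cases a.
by split => b; rewrite /cross h1 h2; ring.
Qed.

Lemma le_tot a b : le a b || le b a.
Proof.
rewrite /le; case: (ltngtP (grp a) (grp b)) => //= _.
rewrite [cross b a]crossC oppr_ge0.
by case: (lerP 0 (cross a b)) => h //; rewrite (ltW h) orbT.
Qed.

Lemma trans_same a b c : grp a = grp b -> grp b = grp c ->
  0 <= cross a b -> 0 <= cross b c -> 0 <= cross a c.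
Proof.
move=> Hab Hbc h1 h2.
have [_ idy] := cross_id a b c.
have [G0 G1 G2] := grp_cases b.
have [A0 A1 A2] := grp_cases a.
have [C0 C1 C2] := grp_cases c.
case: (ltngtP (grp b) 1) => Hb.
- have Hb0 : grp b = 0%N by move: Hb; case: (grp b).
  have [ha|[ha1 ha2]] := A0 (etrans Hab Hb0); have [hc|[hc1 hc2]] := C0 (etrans (esym Hbc) Hb0);
  have [hb|[hb1 hb2]] := G0 Hb0; rewrite /cross in h1 h2 idy *; nra.
- have Hb2 : grp b = 2%N by have := grp_le2 b; move: Hb; case: (grp b) => [|[|[|]]].
  by have [h _] := grp2 (etrans Hab Hb2); rewrite h.
- have [ha|[ha1 ha2]] := A1 (etrans Hab Hb); have [hc|[hc1 hc2]] := C1 (etrans (esym Hbc) Hb);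
  have [hb|[hb1 hb2]] := G1 Hb; rewrite /cross in h1 h2 idy *; nra.
Qed.

Lemma le_trans3 a b c : le a b -> le b c -> le a c.
Proof.
rewrite /le => /orP[h1|/andP[/eqP h1 h1']] /orP[h2|/andP[/eqP h2 h2']].
- by rewrite (ltn_trans h1 h2).
- by rewrite -h2 h1.
- by rewrite h1 h2.
- by rewrite h1 h2 eqxx (trans_same h1 h2 h1' h2') orbT.
Qed.


Lemma grp_not2 v a : cross v a != 0 -> (grp a < 2)%N.
Proof.
move=> H; have := grp_le2 a; rewrite leq_eqVlt => /orP[/eqP E|//].
by have [_ h] := grp2 E; rewrite h eqxx in H.
Qed.

Lemma grp_not2l v a : cross v a != 0 -> (grp v < 2)%N.
Proof. by move=> H; apply: (@grp_not2 a); rewrite crossC oppr_eq0. Qed.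

Lemma leE a b : le a b -> (grp a <= grp b)%N /\ (grp a = grp b -> 0 <= cross a b).
Proof.
rewrite /le => /orP[h|/andP[/eqP h1 h2]]; last by rewrite h1.
by split; [apply: ltnW|move=> E; move: h; rewrite E ltnn].
Qed.

Lemma from1 v a b : le v a -> le a b -> cross v a < 0 -> 0 < cross v b -> False.
Proof.
move=> /leE [va va'] /leE [ab ab'] h1 h2.
have ga := grp_not2 (negbT (lt_eqF h1)).
have gb := grp_not2 (negbT (gt_eqF h2)).
have gv : grp v <> grp a by move=> E; have := va' E; rewrite leNgt h1.
have Ga : grp a = 1%N by move: va ga gv; case: (grp a) => [|[|]] //; case: (grp v).
have Gv : grp v = 0%N by move: va gv; rewrite Ga; case: (grp v) => [|[|]].
have Gb : grp b = 1%N by move: ab gb; rewrite Ga; case: (grp b) => [|[|]].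
have hab := ab' (etrans Ga (esym Gb)).
have [G0 _ _] := grp_cases v; have [_ A1 _] := grp_cases a; have [_ B1 _] := grp_cases b.
have [_ idy] := cross_id v a b.
have [hv|[hv1 hv2]] := G0 Gv; have [ha|[ha1 ha2]] := A1 Ga; have [hb|[hb1 hb2]] := B1 Gb;
rewrite /cross in h1 h2 hab idy; nra.
Qed.

Lemma from2 v a b : le a b -> le b v -> cross v a < 0 -> 0 < cross v b -> False.
Proof.
move=> /leE [ab ab'] /leE [bv bv'] h1 h2.
have ga := grp_not2 (negbT (lt_eqF h1)).
have gb := grp_not2 (negbT (gt_eqF h2)).
have gv : grp b <> grp v by move=> E; have := bv' E; rewrite crossC oppr_ge0 leNgt h2.
have gvl := grp_not2l (negbT (gt_eqF h2)).
have Gb : grp b = 0%N by move: bv gb gv gvl; case: (grp b) => [|[|]] //; case: (grp v) => [|[|]].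
have Gv : grp v = 1%N by move: bv gv gvl; rewrite Gb; case: (grp v) => [|[|]].
have Ga : grp a = 0%N by move: ab; rewrite Gb; case: (grp a).
have hab := ab' (etrans Ga (esym Gb)).
have [_ V1 _] := grp_cases v; have [A0 _ _] := grp_cases a; have [B0 _ _] := grp_cases b.
have [_ idy] := cross_id v a b.
have [hv|[hv1 hv2]] := V1 Gv; have [ha|[ha1 ha2]] := A0 Ga; have [hb|[hb1 hb2]] := B0 Gb;
rewrite /cross in h1 h2 hab idy; nra.
Qed.

Lemma from3 v a b : le b v -> le v a -> cross v a < 0 -> 0 < cross v b -> False.
Proof.
move=> /leE [bv bv'] /leE [va va'] h1 h2.
have ga := grp_not2 (negbT (lt_eqF h1)).
have gv : grp v <> grp a by move=> E; have := va' E; rewrite leNgt h1.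
have gv2 : grp b <> grp v by move=> E; have := bv' E; rewrite crossC oppr_ge0 leNgt h2.
by move: bv va ga gv gv2; case: (grp a) => [|[|]] //; case: (grp v) => [|[|]] //; case: (grp b).
Qed.

End Plane.


Section Sums.
Variable R : realType.

Lemma sum_ge0_nat (F : nat -> R) m k :
  (forall i, (m <= i < k)%N -> 0 <= F i) -> 0 <= \sum_(m <= i < k) F i.
Proof.
move=> H; rewrite big_nat_cond; apply: sumr_ge0 => i /andP[hi _]; exact: H.
Qed.

Lemma sum_le0_nat (F : nat -> R) m k :
  (forall i, (m <= i < k)%N -> F i <= 0) -> \sum_(m <= i < k) F i <= 0.
Proof.
move=> H; rewrite -oppr_ge0 -sumrN; apply: sum_ge0_nat => i hi; rewrite oppr_ge0; exact: H.
Qed.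

Lemma sum_neg_ex (F : nat -> R) m k :
  \sum_(m <= i < k) F i < 0 -> exists i, (m <= i < k)%N /\ F i < 0.
Proof.
case: (boolP (has (fun i => F i < 0) (index_iota m k))) => [/hasP[i hi hF]|/hasPn H].
  by move=> _; exists i; rewrite -mem_index_iota.
move=> hs; exfalso; move: hs; apply/negP; rewrite -leNgt.
apply: sum_ge0_nat => i hi; rewrite leNgt; by apply: H; rewrite mem_index_iota.
Qed.

Lemma sum_pos_ex (F : nat -> R) m k :
  0 < \sum_(m <= i < k) F i -> exists i, (m <= i < k)%N /\ 0 < F i.
Proof.
move=> h; have [|i [hi hF]] := @sum_neg_ex (fun i => - F i) m k.
  by rewrite sumrN oppr_lt0.
by exists i; split => //; rewrite -oppr_lt0.
Qed.

Lemma sum_eq0_each (F : nat -> R) m k :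
  (forall i, (m <= i < k)%N -> 0 <= F i) -> \sum_(m <= i < k) F i = 0 ->
  forall i, (m <= i < k)%N -> F i = 0.
Proof.
move=> H hs i hi; move/eqP: hs; rewrite big_nat_cond.
rewrite (@psumr_eq0 _ _ _ (fun i => (m <= i < k)%N && true)) => [/allP A|j /andP[hj _]].
  by have := A i; rewrite mem_index_iota hi /= => /(_ isT) /eqP.
exact: H.
Qed.

End Sums.


Section Poly2.
Variable R : realType.
Variables (n : nat) (c0 : R * R) (d : nat -> R * R).

Definition q k : R * R := (c0.1 + \sum_(0 <= i < k) (d i).1, c0.2 + \sum_(0 <= i < k) (d i).2).
Arguments q : simpl never.
Definition sub (a b : R * R) : R * R := (a.1 - b.1, a.2 - b.2).
Definition cp i (s : R) : R * R := ((q i).1 + s * (d i).1, (q i).2 + s * (d i).2).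
Definition nz (a : R * R) : bool := (a.1 != 0) || (a.2 != 0).

Lemma qS k : q k.+1 = ((q k).1 + (d k).1, (q k).2 + (d k).2).
Proof. by rewrite /q !big_nat_recr //= !addrA. Qed.

Lemma q0 : q 0 = c0.
Proof. by rewrite /q !big_geq // !addr0; case: c0. Qed.

Lemma cross_sub_q v j k : (j <= k)%N ->
  cross v (sub (q k) (q j)) = \sum_(j <= i < k) cross v (d i).
Proof.
elim: k => [|k IH]; first by rewrite leqn0 => /eqP ->; rewrite big_geq // /cross /sub /=; ring.
rewrite leq_eqVlt => /orP[/eqP <-|hj]; first by rewrite big_geq // /cross /sub /=; ring.
rewrite big_nat_recr //= -IH // qS /cross /sub /=; ring.
Qed.

Lemma sub_q_zero j k : (j <= k)%N -> (forall i, (j <= i < k)%N -> d i = (0, 0)) -> q k = q j.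
Proof.
elim: k => [|k IH]; first by rewrite leqn0 => /eqP ->.
rewrite leq_eqVlt => /orP[/eqP <-//|hj] H.
rewrite qS IH // => [|i /andP[h1 h2]]; last by apply: H; rewrite h1 ltnS ltnW.
by rewrite H /= ?addr0 // -ltnS hj leqnn.
Qed.

Lemma cross_sub_cp v i s : cross v (sub (cp i s) (q i)) = s * cross v (d i).
Proof. rewrite /cross /sub /cp /=; ring. Qed.

Lemma ccp v P k r : cross v (sub (cp k r) P) = cross v (sub (q k) P) + r * cross v (d k).
Proof. rewrite /cross /sub /cp /=; ring. Qed.

Lemma cross_aa (a : R * R) : cross a a = 0.
Proof. rewrite /cross; ring. Qed.

Lemma cp0 i : cp i 0 = q i.
Proof. by rewrite /cp !mul0r !addr0; case: (q i). Qed.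

Lemma cp1 i : cp i 1 = q i.+1.
Proof. by rewrite /cp qS !mul1r. Qed.

Lemma parallel v a b : nz v -> cross v a = 0 -> cross v b = 0 -> cross a b = 0.
Proof.
move=> hv h1 h2; have [i1 i2] := cross_id a b v.
rewrite [cross b v]crossC h1 h2 in i1 i2.
case/orP: hv => hv.
- by apply: (mulIf hv); rewrite mul0r -i1; ring.
- by apply: (mulIf hv); rewrite mul0r -i2; ring.
Qed.

Hypothesis Hsum1 : \sum_(0 <= i < n) (d i).1 = 0.
Hypothesis Hsum2 : \sum_(0 <= i < n) (d i).2 = 0.
Hypothesis Hsort : forall i j, (i <= j < n)%N -> le (d i) (d j).

Lemma qn : q n = q 0.
Proof. by rewrite /q Hsum1 Hsum2 !big_geq. Qed.

Lemma total_cross v : \sum_(0 <= i < n) cross v (d i) = 0.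
Proof. by rewrite -cross_sub_q // qn /cross /sub /=; ring. Qed.

Definition FROMP v p := forall a b, (a < n)%N -> (b < n)%N ->
  [|| (p <= a < b)%N, (a < b < p)%N | (b < p <= a)%N] ->
  ~ (cross v (d a) < 0 /\ 0 < cross v (d b)).

Lemma fromP v p : (forall i, (i < p)%N -> le (d i) v) ->
  (forall i, (p <= i < n)%N -> le v (d i)) -> FROMP v p.
Proof.
move=> H1 H2 a b ha hb /or3P[/andP[h1 h2]|/andP[h1 h2]|/andP[h1 h2]] [c1 c2].
- apply: (from1 (v := v) (a := d a) (b := d b)) => //; first by apply: H2; rewrite h1.
  by apply: Hsort; rewrite ltnW.
- apply: (from2 (v := v) (a := d a) (b := d b)) => //; first by apply: Hsort; rewrite ltnW.
  exact: H1.
- apply: (from3 (v := v) (a := d a) (b := d b)) => //; first exact: H1.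
  by apply: H2; rewrite h2.
Qed.

Lemma convex j k : (j < n)%N -> (k <= n)%N -> 0 <= cross (d j) (sub (q k) (q j)).
Proof.
move=> hj hk.
have F : FROMP (d j) j.
  apply: fromP => i hi; apply: Hsort; first by rewrite ltnW // (ltn_trans hi hj).
  by case/andP: hi => -> ->.
have T := total_cross (d j).
case: (leqP j k) => hjk.
- rewrite cross_sub_q //; rewrite leNgt; apply/negP => hS.
  have [a [ha hneg]] := sum_neg_ex hS.
  have hb : forall b, (b < n)%N -> (b < j)%N || (a < b)%N -> cross (d j) (d b) <= 0.
    move=> b hbn hb; rewrite leNgt; apply/negP => hpos.
    apply: (F a b) => //; first by case/andP: ha => _ h; apply: leq_trans h hk.
    case/andP: ha => ha1 ha2.
    by case/orP: hb => hb; apply/or3P; [apply: Or33|apply: Or31]; rewrite ?hb ?ha1.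
  have S1 : \sum_(0 <= i < j) cross (d j) (d i) <= 0.
    by apply: sum_le0_nat => b /andP[_ hb']; apply: hb; [apply: ltn_trans hb' hj|rewrite hb'].
  have S3 : \sum_(k <= i < n) cross (d j) (d i) <= 0.
    apply: sum_le0_nat => b /andP[h1 h2]; apply: hb => //; apply/orP; right.
    by case/andP: ha => _ h; apply: leq_trans h h1.
  move: T; rewrite (@big_cat_nat _ _ _ j 0 n) ?(ltnW hj) // (@big_cat_nat _ _ _ k j n) //=.
  by move=> T; lra.
- have -> : cross (d j) (sub (q k) (q j)) = - cross (d j) (sub (q j) (q k)).
    rewrite /cross /sub /=; ring.
  rewrite cross_sub_q ?(ltnW hjk) // oppr_ge0 leNgt; apply/negP => hS.
  have [b [hb hpos]] := sum_pos_ex hS.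
  have ha : forall a, (a < n)%N -> (a < b)%N || (j <= a)%N -> 0 <= cross (d j) (d a).
    move=> a han ha; rewrite leNgt; apply/negP => hneg.
    case/andP: hb => hb1 hb2.
    apply: (F a b) => //; first by apply: ltn_trans hb2 hj.
    by case/orP: ha => ha; apply/or3P; [apply: Or32|apply: Or33]; rewrite ?ha ?hb2.
  have S1 : 0 <= \sum_(0 <= i < k) cross (d j) (d i).
    apply: sum_ge0_nat => a /andP[_ h]; apply: ha; first by apply: ltn_trans h (ltn_trans hjk hj).
    by case/andP: hb => hb1 _; rewrite (leq_trans h hb1).
  have S3 : 0 <= \sum_(j <= i < n) cross (d j) (d i).
    by apply: sum_ge0_nat => a /andP[h1 h2]; apply: ha => //; rewrite h1 orbT.
  move: T; rewrite (@big_cat_nat _ _ _ k 0 n) // (@big_cat_nat _ _ _ j k n) ?(ltnW hjk) ?(ltnW hj) //=.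
  by move=> T; lra.
Qed.

Lemma pair_eq (a b : R * R) : a.1 = b.1 -> a.2 = b.2 -> a = b.
Proof. by case: a => ? ?; case: b => ? ? /= -> ->. Qed.

Lemma nzN a : ~~ nz a -> a = (0, 0).
Proof. by rewrite /nz negb_or !negbK => /andP[/eqP h1 /eqP h2]; apply: pair_eq. Qed.

Definition cent : R * R :=
  ((\sum_(0 <= k < n) (q k).1) / n%:R, (\sum_(0 <= k < n) (q k).2) / n%:R).

Lemma gen_cent (x y : nat -> R) (a b X Y : R) :
  (n%:R : R) != 0 ->
  n%:R * (a * ((\sum_(0 <= k < n) y k) / n%:R - Y) - b * ((\sum_(0 <= k < n) x k) / n%:R - X)) =
  \sum_(0 <= k < n) (a * (y k - Y) - b * (x k - X)).
Proof.
move=> hn'; rewrite sumrB -mulr_sumr -mulr_sumr sumrB sumrB !sumr_const_nat subn0.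
rewrite -[Y *+ n]mulr_natr -[X *+ n]mulr_natr.
set S1 := \sum_(0 <= k < n) x k; set S2 := \sum_(0 <= k < n) y k.
set N := n%:R.
by field.
Qed.
Lemma cent_sum j : (0 < n)%N ->
  n%:R * cross (d j) (sub cent (q j)) = \sum_(0 <= k < n) cross (d j) (sub (q k) (q j)).
Proof.
move=> hn; have hn' : (n%:R : R) != 0 by rewrite pnatr_eq0 -lt0n.
rewrite /cent /cross /sub.
exact: (@gen_cent (fun k => (q k).1) (fun k => (q k).2)).
Qed.

Section NC.
Hypothesis Hnc : exists a b, [/\ (a < n)%N, (b < n)%N & cross (d a) (d b) != 0].

Lemma ex_nz : exists j, (j < n)%N /\ nz (d j).
Proof.
have [a [b [ha hb hab]]] := Hnc; exists a; split => //.
apply/negP => /negP /nzN E; move: hab; rewrite E /cross /=.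
by rewrite !mul0r subrr eqxx.
Qed.

Lemma left_strict j : (j < n)%N -> nz (d j) -> 0 < cross (d j) (sub cent (q j)).
Proof.
move=> hj hnz; have hn : (0 < n)%N by apply: leq_ltn_trans hj.
have hn' : (0 : R) < n%:R by rewrite ltr0n.
rewrite -(pmulr_rgt0 _ hn') cent_sum //.
have H0 : forall k, (0 <= k < n)%N -> 0 <= cross (d j) (sub (q k) (q j)).
  by move=> k /andP[_ hk]; apply: convex => //; apply: ltnW.
rewrite lt_def sum_ge0_nat // andbT; apply/eqP => hs.
have Z := sum_eq0_each H0 hs.
have Z' : forall l, (l < n)%N -> cross (d j) (d l) = 0.
  move=> l hl.
  have -> : cross (d j) (d l) = cross (d j) (sub (q l.+1) (q j)) - cross (d j) (sub (q l) (q j)).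
    by rewrite qS /cross /sub /=; ring.
  rewrite (Z l) ?hl // subr0.
  case: (ltngtP l.+1 n) => hl'; first by apply: Z; rewrite hl'.
  - by move: hl'; rewrite ltnS leqNgt hl.
  - by rewrite hl' qn; apply: Z; rewrite hn.
have [a [b [ha hb hab]]] := Hnc.
by move: hab; rewrite (parallel hnz (Z' a ha) (Z' b hb)) eqxx.
Qed.

Lemma vertex_aux i : (exists j, (j < i)%N /\ nz (d j)) ->
  exists j, [/\ (j < i)%N, nz (d j) & q j.+1 = q i].
Proof.
elim: i => [[j [//]]|i IH [j [hj hnz]]].
case: (boolP (nz (d i))) => hi; first by exists i.
have [|k [hk1 hk2 hk3]] := IH.
  exists j; split => //; move: hj; rewrite ltnS leq_eqVlt => /orP[/eqP E|//].
  by move: hi; rewrite -E hnz.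
exists k; split => //; first by apply: ltnW.
by rewrite hk3 qS (nzN hi) /= !addr0.
Qed.

Lemma vertex i : (i <= n)%N -> exists j, [/\ (j < n)%N, nz (d j) & q j.+1 = q i].
Proof.
move=> hi.
case: (boolP [exists j : 'I_i, nz (d j)]) => [/existsP [j hj]|/existsPn H].
  have [k [hk1 hk2 hk3]] := vertex_aux (ex_intro _ (nat_of_ord j) (conj (ltn_ord j) hj)).
  by exists k; split => //; apply: leq_trans hi.
have [k [hk1 hk2 hk3]] := vertex_aux (let: ex_intro j (conj a b) := ex_nz in
                                        ex_intro _ j (conj a b)).
exists k; split => //; rewrite hk3 qn (sub_q_zero (leq0n i)) // => l /andP[_ hl].
by apply: nzN; apply: (H (Ordinal hl)).
Qed.

Lemma cent_notin i s : (i < n)%N -> 0 <= s <= 1 -> cp i s <> cent.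
Proof.
move=> hi hs E.
case: (boolP (nz (d i))) => hnz.
  by have := left_strict hi hnz; rewrite -E cross_sub_cp cross_aa mulr0 ltxx.
have [j [hj hjnz hq]] := vertex (ltnW hi).
have := left_strict hj hjnz.
have -> : cent = q j.+1.
  rewrite -E /cp (nzN hnz) /= !mulr0 !addr0 hq; exact: pair_eq.
by rewrite -cp1 cross_sub_cp cross_aa mulr0 ltxx.
Qed.

Lemma normalize i s : (i < n)%N -> 0 <= s <= 1 ->
  exists i' s', [/\ (i' < n)%N, 0 <= s' <= 1, nz (d i') & cp i' s' = cp i s].
Proof.
move=> hi hs; case: (boolP (nz (d i))) => hnz; first by exists i, s.
have [j [hj hjnz hq]] := vertex (ltnW hi).
exists j, 1; split => //; first by rewrite ler01 lexx.
rewrite cp1 hq /cp (nzN hnz) /= !mulr0 !addr0; exact: pair_eq.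
Qed.

Lemma pexists v : exists p, [/\ (p <= n)%N, (forall i, (i < p)%N -> le (d i) v) &
   (forall i, (p <= i < n)%N -> le v (d i))].
Proof.
case: (boolP [exists i : 'I_n, le v (d i)]) => [/existsP [i hi]|/existsPn H].
- have ex : exists k, (k < n)%N && le v (d k) by exists i; rewrite ltn_ord hi.
  case: (ex_minnP ex) => p /andP[hp hpv] hmin.
  exists p; split; first exact: ltnW.
  + move=> k hk; have hkn : (k < n)%N := ltn_trans hk hp.
    have hn : ~~ le v (d k).
      apply/negP => hk'; have := hmin k; rewrite hkn hk' => /(_ isT); by rewrite leqNgt hk.
    by have := le_tot v (d k); rewrite (negbTE hn).
  + by move=> k /andP[h1 h2]; apply: le_trans3 hpv _; apply: Hsort; rewrite h1 h2.
- exists n; split => //; last by move=> k /andP[h1 h2]; move: (leq_ltn_trans h1 h2); rewrite ltnn.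
  move=> k hk; have hn := H (Ordinal hk).
  by have := le_tot v (d k); rewrite (negbTE hn).
Qed.

Lemma na4 v a b c e : (a < b)%N -> (b < c)%N -> (c < e)%N -> (e < n)%N ->
  ~ [/\ cross v (d a) < 0, 0 < cross v (d b), cross v (d c) < 0 & 0 < cross v (d e)] /\
  ~ [/\ 0 < cross v (d a), cross v (d b) < 0, 0 < cross v (d c) & cross v (d e) < 0].
Proof.
move=> hab hbc hce hen.
have [p [hp H1 H2]] := pexists v.
have F := fromP H1 H2.
have hcn : (c < n)%N := ltn_trans hce hen.
have hbn : (b < n)%N := ltn_trans hbc hcn.
have han : (a < n)%N := ltn_trans hab hbn.
split => [[h1 h2 h3 h4]|[h1 h2 h3 h4]].
- case: (leqP p c) => hpc.
  + by apply: (F c e hcn hen _ (conj h3 h4)); rewrite hpc hce.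
  + by apply: (F a b han hbn _ (conj h1 h2)); rewrite hab (ltn_trans hbc hpc) orbT.
- case: (leqP p b) => hpb.
  + by apply: (F b c hbn hcn _ (conj h2 h3)); rewrite hpb hbc.
  + case: (leqP p c) => hpc.
    * apply: (F e a hen han _ (conj h4 h1)).
      by rewrite (ltn_trans hab hpb) (leq_trans hpc (ltnW hce)) !orbT.
    * by apply: (F b c hbn hcn _ (conj h2 h3)); rewrite hbc hpc orbT.
Qed.

Lemma flat v P' k : nz v -> nz (d k) -> 0 < cross (d k) (sub P' (q k)) ->
  cross v (sub (q k) P') = 0 -> cross v (d k) = 0 -> False.
Proof.
move=> hv hk hl h1 h2.
have := parallel hv h2 h1.
have -> : cross (d k) (sub (q k) P') = - cross (d k) (sub P' (q k)) by rewrite /cross /sub /=; ring.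
by move/eqP; rewrite oppr_eq0 (gt_eqF hl).
Qed.

Lemma sum_zero_range (F : nat -> R) a b : (forall l, (a <= l < b)%N -> F l = 0) ->
  forall l, (l <= b)%N -> \sum_(a <= i < l) F i = 0.
Proof.
move=> H l hl; rewrite big_nat_cond big1 // => i /andP[/andP[h1 h2] _].
by apply: H; rewrite h1 (leq_trans h2 hl).
Qed.

Lemma core v P' i j s t : nz v -> (i < j)%N -> (j < n)%N -> 0 <= s <= 1 -> 0 <= t <= 1 ->
  (forall k, (k < n)%N -> nz (d k) -> 0 < cross (d k) (sub P' (q k))) ->
  cross v (sub (cp i s) P') = 0 -> cross v (sub (cp j t) P') = 0 ->
  0 < cross v (d i) -> 0 < cross v (d j) -> cp i s = cp j t.
Proof.
move=> hv hij hjn /andP[s0 s1] /andP[t0 t1] HL cx cy di dj.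
have hin : (i < n)%N := ltn_trans hij hjn.
pose c k := cross v (sub (q k) P').
pose del k := cross v (d k).
have di' : 0 < del i := di.
have dj' : 0 < del j := dj.
have cdiff : forall a b, (a <= b)%N -> c b - c a = \sum_(a <= l < b) del l.
  by move=> a b hab; rewrite -cross_sub_q // /c /cross /sub /=; ring.
have ccp : forall k r, cross v (sub (cp k r) P') = c k + r * del k.
  by move=> k r; rewrite /c /del /cross /sub /cp /=; ring.
rewrite ccp in cx; rewrite ccp in cy.
have cS : forall k, c k.+1 = c k + del k.
  by move=> k; have := cdiff k k.+1 (leqnSn k); rewrite big_nat1 => <-; ring.
have T : \sum_(0 <= l < n) del l = 0 := total_cross v.
have EM : \sum_(i.+1 <= l < j) del l = - (t * del j) - (1 - s) * del i.
  by rewrite -cdiff // cS; lra.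
have Smid : \sum_(i <= l < j.+1) del l = c j.+1 - c i.
  by rewrite cdiff // (leq_trans (ltnW hij) (leqnSn j)).
have EW : \sum_(0 <= l < i) del l + \sum_(j.+1 <= l < n) del l = - ((1 - t) * del j + s * del i).
  have h1 : (i <= j.+1)%N := leq_trans (ltnW hij) (leqnSn j).
  move: T; rewrite (@big_cat_nat _ _ _ i 0 n) ?(ltnW hin) //= (@big_cat_nat _ _ _ j.+1 i n) //=.
  by rewrite Smid cS; lra.
have key : forall m w, (i < m < j)%N -> del m < 0 -> (w < i)%N || (j < w < n)%N -> del w < 0 -> False.
  move=> m w /andP[hm1 hm2] hm /orP[hw|/andP[hw1 hw2]] hw'.
  - by have [A _] := na4 v hw hm1 hm2 hjn; apply: A.
  - by have [_ A] := na4 v hm1 hm2 hw1 hw2; apply: A.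
have flat0 : forall l, (l < n)%N -> c l = 0 -> del l = 0 -> d l = (0, 0).
  move=> l hl h1 h2; apply: nzN; apply/negP => hnz.
  exact: (flat hv hnz (HL l hl hnz) h1 h2).
case: (ltrP (\sum_(i.+1 <= l < j) del l) 0) => hM.
- have [m [hm hm']] := sum_neg_ex hM.
  have O1 : forall l, (0 <= l < i)%N -> 0 <= del l.
    move=> l /andP[_ hl]; rewrite leNgt; apply/negP => hl'.
    by apply: (key m l hm hm'); rewrite ?hl.
  have O2 : forall l, (j.+1 <= l < n)%N -> 0 <= del l.
    move=> l /andP[hl1 hl2]; rewrite leNgt; apply/negP => hl'.
    by apply: (key m l hm hm'); rewrite ?hl1 ?hl2 ?orbT.
  have S1 := sum_ge0_nat O1; have S2 := sum_ge0_nat O2.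
  have P1 : 0 <= (1 - t) * del j by apply: mulr_ge0; [lra|apply: ltW; assumption].
  have P2 : 0 <= s * del i by apply: mulr_ge0; [lra|apply: ltW; assumption].
  have E1 : \sum_(0 <= l < i) del l = 0 by lra.
  have E2 : \sum_(j.+1 <= l < n) del l = 0 by lra.
  have P3 : (1 - t) * del j = 0 by lra.
  have P4 : s * del i = 0 by lra.
  have ht : t = 1.
    by move/eqP: P3; rewrite mulf_eq0 (gt_eqF dj) orbF subr_eq0 => /eqP.
  have hs : s = 0.
    by move/eqP: P4; rewrite mulf_eq0 (gt_eqF di) orbF => /eqP.
  have Z1 := sum_eq0_each O1 E1; have Z2 := sum_eq0_each O2 E2.
  have cj1 : c j.+1 = 0 by rewrite cS; move: cy; rewrite ht; lra.
  have c2 : forall l, (j.+1 <= l <= n)%N -> c l = 0.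
    move=> l /andP[h1 h2]; have := cdiff _ _ h1; rewrite (sum_zero_range Z2) // cj1; lra.
  have D2 : forall l, (j.+1 <= l < n)%N -> d l = (0, 0).
    move=> l /andP[h1 h2]; apply: flat0 => //; first by apply: c2; rewrite h1 ltnW.
    by apply: Z2; rewrite h1.
  have cn : c 0 = 0 by rewrite /c -qn; apply: c2; rewrite hjn leqnn.
  have D1 : forall l, (0 <= l < i)%N -> d l = (0, 0).
    move=> l /andP[_ h2]; apply: flat0; first by apply: ltn_trans h2 hin.
    + have := cdiff _ _ (leq0n l); rewrite (sum_zero_range Z1) ?(ltnW h2) // cn; lra.
    + by apply: Z1; rewrite h2.
  by rewrite hs ht cp0 cp1 -(sub_q_zero hjn D2) qn (sub_q_zero (leq0n i) D1).
- have P1 : 0 <= t * del j by apply: mulr_ge0; [lra|apply: ltW; assumption].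
  have P2 : 0 <= (1 - s) * del i by apply: mulr_ge0; [lra|apply: ltW; assumption].
  have hM0 : \sum_(i.+1 <= l < j) del l = 0 by lra.
  have P3 : t * del j = 0 by lra.
  have P4 : (1 - s) * del i = 0 by lra.
  have ht : t = 0.
    by move/eqP: P3; rewrite mulf_eq0 (gt_eqF dj) orbF => /eqP.
  have hs : s = 1.
    by move/eqP: P4; rewrite mulf_eq0 (gt_eqF di) orbF subr_eq0 => /eqP.
  have [w [hw hw']] : exists w, ((w < i)%N || (j < w < n)%N) /\ del w < 0.
    case: (ltrP (\sum_(0 <= l < i) del l) 0) => h1.
    + by have [w [/andP[_ hw] hw']] := sum_neg_ex h1; exists w; rewrite hw.
    + have h2 : \sum_(j.+1 <= l < n) del l < 0 by move: EW; rewrite ht hs; lra.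
      by have [w [/andP[hw1 hw2] hw']] := sum_neg_ex h2; exists w; rewrite hw1 hw2 orbT.
  have O : forall l, (i.+1 <= l < j)%N -> 0 <= del l.
    move=> l hl; rewrite leNgt; apply/negP => hl'; exact: (key l w hl hl' hw hw').
  have Z := sum_eq0_each O hM0.
  have ci1 : c i.+1 = 0 by rewrite cS; move: cx; rewrite hs; lra.
  have D : forall l, (i.+1 <= l < j)%N -> d l = (0, 0).
    move=> l /andP[h1 h2]; apply: flat0; first by apply: ltn_trans h2 hjn.
    + have := cdiff _ _ h1; rewrite (sum_zero_range Z) ?(ltnW h2) // ci1; lra.
    + by apply: Z; rewrite h1.
  by rewrite hs ht cp0 cp1 (sub_q_zero hij D).
Qed.
Lemma LF k r (l : R) v : (k < n)%N -> nz (d k) -> 0 < l ->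
  sub (cp k r) cent = (l * v.1, l * v.2) -> 0 < cross v (d k).
Proof.
move=> hk hnz hl E.
have h := left_strict hk hnz.
have [e1 e2] : (cp k r).1 - cent.1 = l * v.1 /\ (cp k r).2 - cent.2 = l * v.2.
  by move: E; rewrite /sub => [[-> ->]].
have c1 : cent.1 = (q k).1 + r * (d k).1 - l * v.1 by move: e1; rewrite /cp /=; lra.
have c2 : cent.2 = (q k).2 + r * (d k).2 - l * v.2 by move: e2; rewrite /cp /=; lra.
have e : cross (d k) (sub cent (q k)) = l * cross v (d k).
  by rewrite /cross /sub c1 c2 /=; ring.
by rewrite e pmulr_rgt0 in h.
Qed.

Lemma ray_nc i j s t (l : R) : (i < n)%N -> (j < n)%N -> 0 <= s <= 1 -> 0 <= t <= 1 -> 0 < l ->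
  sub (cp i s) cent = (l * (sub (cp j t) cent).1, l * (sub (cp j t) cent).2) -> cp i s = cp j t.
Proof.
move=> hi hj hs ht hl.
have [i' [s' [hi' hs' hnzi <-]]] := normalize hi hs.
have [j' [t' [hj' ht' hnzj <-]]] := normalize hj ht.
have [v Hv] : exists v, v = sub (cp j' t') cent by eexists.
rewrite -Hv => E.
case: (boolP (nz v)) => hv; last first.
  move: (nzN hv) => V; rewrite V /= !mulr0 in E.
  have [e1 e2] : (cp i' s').1 - cent.1 = 0 /\ (cp i' s').2 - cent.2 = 0.
    by move: E; rewrite /sub => [[-> ->]].
  have [f1 f2] : (cp j' t').1 - cent.1 = 0 /\ (cp j' t').2 - cent.2 = 0.
    by move: Hv; rewrite V /sub => [[<- <-]].
  by apply: pair_eq; lra.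
have dxi := LF hi' hnzi hl E.
have dyj : 0 < cross v (d j').
  by apply: (@LF j' t' 1) => //; rewrite -Hv !mul1r; case: (v).
have cx : cross v (sub (cp i' s') cent) = 0 by rewrite E /cross /=; ring.
have cy : cross v (sub (cp j' t') cent) = 0 by rewrite -Hv cross_aa.
case: (ltngtP i' j') => hij.
- exact: (core hv hij hj' hs' ht' left_strict cx cy dxi dyj).
- apply/esym; exact: (core hv hij hi' ht' hs' left_strict cy cx dyj dxi).
- rewrite -hij in cy dyj *.
  have : (s' - t') * cross v (d i') = 0.
    by move: cx cy; rewrite !ccp mulrBl; lra.
  move/eqP; rewrite mulf_eq0 (gt_eqF dxi) orbF subr_eq0 => /eqP ->.
  by [].
Qed.

End NC.

Lemma lin_aux (e X Y P Q : R * R) l : X.1 - P.1 = l * (Y.1 - P.1) -> X.2 - P.2 = l * (Y.2 - P.2) ->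
  cross e (sub X Q) = 0 -> cross e (sub Y Q) = 0 -> cross e (sub P Q) * (l - 1) = 0.
Proof.
move=> h1 h2; rewrite /cross /sub /= => f1 f2.
have X1 : X.1 = P.1 + l * (Y.1 - P.1) by lra.
have X2 : X.2 = P.2 + l * (Y.2 - P.2) by lra.
transitivity (l * (e.1 * (Y.2 - Q.2) - e.2 * (Y.1 - Q.1)) - (e.1 * (X.2 - Q.2) - e.2 * (X.1 - Q.1))).
  by rewrite X1 X2; ring.
by rewrite f1 f2; ring.
Qed.

Lemma collinear_case e : nz e -> (forall k, (k < n)%N -> cross e (d k) = 0) ->
  exists P, (forall i s, (i < n)%N -> 0 <= s <= 1 -> cp i s <> P) /\
    (forall i j s t (l : R), (i < n)%N -> (j < n)%N -> 0 <= s <= 1 -> 0 <= t <= 1 -> 0 < l ->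
       sub (cp i s) P = (l * (sub (cp j t) P).1, l * (sub (cp j t) P).2) -> cp i s = cp j t).
Proof.
move=> he H.
have fz : forall i s, (i < n)%N -> cross e (sub (cp i s) (q 0)) = 0.
  move=> i s hi.
  have -> : cross e (sub (cp i s) (q 0)) = cross e (sub (q i) (q 0)) + s * cross e (d i).
    by rewrite /cross /sub /cp /=; ring.
  rewrite H // mulr0 addr0 cross_sub_q // big_nat_cond big1 // => l /andP[/andP[_ hl] _].
  by apply: H; apply: ltn_trans hl hi.
pose P := ((q 0).1 - e.2, (q 0).2 + e.1).
have fP : 0 < cross e (sub P (q 0)).
  rewrite /cross /sub /P /=.
  have s1 := sqr_ge0 e.1; have s2 := sqr_ge0 e.2.
  rewrite !expr2 in s1 s2.
  case/orP: he => h.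
  + have := exprn_even_gt0 (n := 2) e.1 isT; rewrite h orbT expr2 => h'. lra.
  + have := exprn_even_gt0 (n := 2) e.2 isT; rewrite h orbT expr2 => h'. lra.
exists P; split.
  by move=> i s hi hs E; have := fz i s hi; rewrite E => h; move: fP; rewrite h ltxx.
move=> i j s t l hi hj hs ht hl E.
have fx := fz i s hi; have fy := fz j t hj.
have [e1 e2] : (cp i s).1 - P.1 = l * ((cp j t).1 - P.1) /\ (cp i s).2 - P.2 = l * ((cp j t).2 - P.2).
  by move: E; rewrite /sub /= => [[-> ->]].
have hl1 : l = 1.
  have : cross e (sub P (q 0)) * (l - 1) = 0 by apply: lin_aux e1 e2 fx fy.
  by move/eqP; rewrite mulf_eq0 (gt_eqF fP) /= subr_eq0 => /eqP.
by apply: pair_eq; move: e1 e2; rewrite hl1 !mul1r => e1 e2; lra.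
Qed.

Theorem plane_main : exists P,
  (forall i s, (i < n)%N -> 0 <= s <= 1 -> cp i s <> P) /\
  (forall i j s t (l : R), (i < n)%N -> (j < n)%N -> 0 <= s <= 1 -> 0 <= t <= 1 -> 0 < l ->
     sub (cp i s) P = (l * (sub (cp j t) P).1, l * (sub (cp j t) P).2) -> cp i s = cp j t).
Proof.
case: (boolP [exists a : 'I_n, exists b : 'I_n, cross (d a) (d b) != 0]).
  move=> /existsP [a /existsP [b hab]].
  have Hnc : exists a b, [/\ (a < n)%N, (b < n)%N & cross (d a) (d b) != 0].
    by exists a, b; split.
  exists cent; split; first exact: cent_notin.
  exact: ray_nc.
move=> /existsPn H.
have Hz : forall a b, (a < n)%N -> (b < n)%N -> cross (d a) (d b) = 0.
  move=> a b ha hb; have := H (Ordinal ha); move/existsPn => /(_ (Ordinal hb)).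
  by rewrite negbK => /eqP.
case: (boolP [exists j : 'I_n, nz (d j)]) => [/existsP [j hj]|/existsPn H2].
  by apply: (@collinear_case (d j)) => // k hk; apply: Hz.
apply: (@collinear_case (1, 0)); first by rewrite /nz /= oner_eq0.
move=> k hk; have := H2 (Ordinal hk); move/nzN => /= ->.
by rewrite /cross /=; ring.
Qed.
End Poly2.


Section Gen.
Variable R : realType.
Notation V := 'rV[R]_3.
Implicit Types L : seq V.

Lemma vtx_mod L i : vtx L (i %% size L) = vtx L i.
Proof. by rewrite /vtx modn_mod. Qed.

Lemma vtx_small L i : (i < size L)%N -> vtx L i = nth 0 L i.
Proof. by move=> h; rewrite /vtx modn_small. Qed.

Lemma on_edge_mod L i s : on_edge L (i %% size L) s = on_edge L i s.
Proof.
rewrite /on_edge vtx_mod; congr (_ + _ *: (_ - _)).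
by rewrite /vtx -[(i %% size L).+1]addn1 modnDml addn1.
Qed.

Lemma on_edge0 L i : on_edge L i 0 = vtx L i.
Proof. by rewrite /on_edge scale0r addr0. Qed.

Lemma on_edge1 L i : on_edge L i 1 = vtx L i.+1.
Proof. by rewrite /on_edge scale1r addrC subrK. Qed.

Lemma simple_size L : simple_polygon L -> (1 < size L)%N.
Proof.
case=> h0 H; case: (ltngtP 1 (size L)) => // h.
- by move: h0 h; case: (size L).
- have e : forall i, vtx L i = vtx L 0 by move=> i; rewrite /vtx -h !modn1.
  have E : on_edge L 0 0 = on_edge L 0 (1/2) by rewrite /on_edge !e !subrr !scaler0.
  have h1 : 0 <= (0:R) < 1 by rewrite lexx ltr01.
  have h2 : 0 <= (1/2 : R) < 1 by apply/andP; split; lra.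
  have [_ ] := H 0%N 0%N 0 (1/2) h0 h0 h1 h2 E.
  by move=> ee; clear -ee; lra.
Qed.

Lemma vtx_on_curve L i : (0 < size L)%N -> on_curve L (vtx L i).
Proof.
move=> h; exists (i %% size L)%N, 0; split; first by rewrite ltn_mod.
by rewrite lexx ler01; split => //; rewrite on_edge0 vtx_mod.
Qed.

Lemma on_edge_on_curve L i s : (i < size L)%N -> 0 <= s <= 1 -> on_curve L (on_edge L i s).
Proof. by move=> hi hs; exists i, s. Qed.

Lemma nth_rot0 L k i : (k <= size L)%N -> (i < size L)%N ->
  nth 0 (rot k L) i = nth 0 L ((i + k) %% size L).
Proof.
move=> hk hi; rewrite /rot nth_cat size_drop.
move: (size L) hk hi => N hk hi.
case: ltnP => h.
- have a1 : (i + k < N)%N by clear -h hk; lia.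
  by rewrite nth_drop modn_small // addnC.
- have a1 : (i - (N - k) < k)%N by clear -h hk hi; lia.
  have a2 : (i + k = (i - (N - k)) + N)%N by clear -h hk hi; lia.
  rewrite nth_take // a2 modnDr modn_small //.
  by apply: leq_trans a1 hk.
Qed.

Lemma vtx_rot L k i : (k <= size L)%N -> vtx (rot k L) i = vtx L (i + k).
Proof.
move=> hk; case: (posnP (size L)) => hL.
  by move: hL => /eqP; rewrite size_eq0 => /eqP ->; rewrite /vtx /rot /= !nth_nil.
rewrite /vtx size_rot nth_rot0 ?ltn_mod //; congr nth.
by rewrite modnDml.
Qed.

Lemma on_edge_rot L k i s : (k <= size L)%N -> on_edge (rot k L) i s = on_edge L (i + k) s.
Proof. by move=> hk; rewrite /on_edge !vtx_rot // addSn. Qed.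

Lemma simple_rot L k : (k <= size L)%N -> simple_polygon L -> simple_polygon (rot k L).
Proof.
move=> hk [h0 H]; split; first by rewrite size_rot.
move=> i j s t; rewrite size_rot => hi hj hs ht; rewrite !on_edge_rot // => E.
have := H ((i + k) %% size L)%N ((j + k) %% size L)%N s t.
rewrite !ltn_mod h0 !on_edge_mod => /(_ isT isT hs ht E) [e ->]; split => //.
by move/eqP: e; rewrite eqn_modDr !modn_small // => /eqP.
Qed.

End Gen.

Section Cone.
Variable R : realType.
Notation V := 'rV[R]_3.
Variables (P : seq V) (O : V).
Hypothesis HP : simple_polygon P.
Hypothesis HO : ~ on_curve P O.
Hypothesis Hray : forall x y (l : R), on_curve P x -> on_curve P y -> 0 < l ->
  x - O = l *: (y - O) -> x = y.

Local Notation m := (size P).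

Lemma m2 : (1 < m)%N. Proof. exact: simple_size HP. Qed.
Lemma m0 : (0 < m)%N. Proof. exact: ltnW m2. Qed.

Definition p0 := nth 0 P 0.
Definition RR k := O :: (drop k.+1 P ++ [:: p0]).

Lemma vP_curve i : on_curve P (vtx P i).
Proof. exact: vtx_on_curve m0. Qed.

Lemma vP_neqO i : vtx P i <> O.
Proof. by move=> E; apply: HO; rewrite -E; apply: vP_curve. Qed.

Lemma p0E : vtx P 0 = p0.
Proof. by rewrite /vtx mod0n. Qed.

Lemma vPm : vtx P m = p0.
Proof. by rewrite /vtx modnn. Qed.

Lemma injP i j s t : (i < m)%N -> (j < m)%N -> 0 <= s < 1 -> 0 <= t < 1 ->
  on_edge P i s = on_edge P j t -> i = j /\ s = t.
Proof. by case: HP => _ H; apply: H. Qed.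

Lemma vtx_inj i j : (i < m)%N -> (j < m)%N -> vtx P i = vtx P j -> i = j.
Proof.
move=> hi hj E; have h : 0 <= (0:R) < 1 by rewrite lexx ltr01.
have E' : on_edge P i 0 = on_edge P j 0 by rewrite !on_edge0.
by have [] := injP hi hj h h E'.
Qed.

Lemma sizeRR k : (k < m)%N -> size (RR k) = (m - k).+1.
Proof. by move=> hk; rewrite /= size_cat size_drop /= addn1; congr _.+1; clear -hk; lia. Qed.

Lemma nthR k i : (k < m)%N -> (0 < i)%N -> (i <= m - k)%N -> nth 0 (RR k) i = vtx P (k + i).
Proof.
move=> hk; case: i => [//|i] _ hi /=; rewrite nth_cat size_drop.
case: ltnP => h.
- rewrite nth_drop /vtx modn_small; last by clear -h; lia.
  by rewrite addSnnS.
- have e : i = (m - k.+1)%N by clear -h hi hk; lia.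
  rewrite e subnn /= -vPm; congr vtx; clear -hk; lia.
Qed.

Lemma vtxR k i : (k < m)%N -> (0 < i)%N -> (i <= m - k)%N -> vtx (RR k) i = vtx P (k + i).
Proof.
move=> hk h1 h2; rewrite vtx_small ?nthR // sizeRR //; clear -h2; lia.
Qed.

Lemma vtxR0 k : (k < m)%N -> vtx (RR k) 0 = O.
Proof. by move=> hk; rewrite /vtx mod0n. Qed.

Lemma vtxRN k : (k < m)%N -> vtx (RR k) (m - k).+1 = O.
Proof. by move=> hk; rewrite /vtx sizeRR // modnn. Qed.

Lemma oeR0 k s : (k < m)%N -> on_edge (RR k) 0 s = O + s *: (vtx P k.+1 - O).
Proof.
move=> hk; rewrite /on_edge vtxR0 // vtxR // ?addn1 //; clear -hk; lia.
Qed.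

Lemma oeRmid k i s : (k < m)%N -> (0 < i)%N -> (i < m - k)%N ->
  on_edge (RR k) i s = on_edge P (k + i) s.
Proof.
move=> hk h1 h2; rewrite /on_edge !vtxR // ?addnS //; by apply: ltnW.
Qed.

Lemma oeRlast k s : (k < m)%N -> on_edge (RR k) (m - k) s = p0 + s *: (O - p0).
Proof.
move=> hk; have h1 : (0 < m - k)%N by rewrite subn_gt0.
by rewrite /on_edge vtxRN // vtxR // subnKC ?vPm //; apply: ltnW.
Qed.

Lemma onR k x : (k < m)%N -> on_curve (RR k) x ->
  [\/ exists s, 0 <= s <= 1 /\ x = O + s *: (vtx P k.+1 - O),
      exists j s, [/\ (k < j < m)%N, 0 <= s <= 1 & x = on_edge P j s] |
      exists s, 0 <= s <= 1 /\ x = p0 + s *: (O - p0)].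
Proof.
move=> hk [i [s [hi [hs ->]]]]; rewrite sizeRR // ltnS in hi.
case: (posnP i) => [->|h1]; first by apply: Or31; exists s; rewrite oeR0.
case: (ltnP i (m - k)) => h2.
- apply: Or32; exists (k + i)%N, s; rewrite oeRmid //; split => //.
  by apply/andP; split; clear -h1 h2 hk; lia.
- have -> : i = (m - k)%N by apply/eqP; rewrite eqn_leq hi h2.
  by apply: Or33; exists s; rewrite oeRlast.
Qed.

Ltac vec_lra E := let ci := fresh "ci" in apply/rowP => ci; have := congr1 (fun v : 'rV[_]_3 => v 0 ci) E; rewrite !mxE => ?; lra.

Lemma scale_solve (a b : V) (al be : R) : al != 0 -> al *: a = be *: b -> a = (be / al) *: b.
Proof. by move=> ha E; rewrite -(scalerK ha a) E scalerA mulrC. Qed.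

Lemma scale_eq0 (a : R) (v : V) : a *: v = 0 -> a = 0 \/ v = 0.
Proof. by move/eqP; rewrite scaler_eq0 => /orP[/eqP|/eqP]; [left|right]. Qed.

Lemma subr0_eq (a b : V) : a - b = 0 -> a = b.
Proof. by move/eqP; rewrite subr_eq0 => /eqP. Qed.

Lemma oe_curve j s : (j < m)%N -> 0 <= s <= 1 -> on_curve P (on_edge P j s).
Proof. by move=> hj hs; exists j, s. Qed.

Lemma p0_curve : on_curve P p0.
Proof. by rewrite -p0E; apply: vP_curve. Qed.

Lemma p0_oe : p0 = on_edge P 0 0.
Proof. by rewrite on_edge0 p0E. Qed.

Lemma O_neq_p0 : p0 - O != 0.
Proof. by rewrite subr_eq0; apply/eqP; rewrite -p0E; apply: vP_neqO. Qed.

Lemma half_le (s : R) : 0 <= s < 1 -> 0 <= s <= 1.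
Proof. by case/andP => h1 h2; rewrite h1 ltW. Qed.

Section SimpleR.
Variable k : nat.
Hypothesis hk : (k.+2 <= m)%N.
Let hk1 : (k < m)%N. Proof. by apply: ltnW. Qed.
Let pk := vtx P k.+1.

Lemma pk_neqO : pk - O != 0.
Proof. by rewrite subr_eq0; apply/eqP; apply: vP_neqO. Qed.

Lemma fAA s t : O + s *: (pk - O) = O + t *: (pk - O) -> s = t.
Proof.
move/addrI => E.
have : (s - t) *: (pk - O) = 0 by rewrite scalerBl E subrr.
case/scale_eq0 => [/eqP|h]; first by rewrite subr_eq0 => /eqP.
by move: pk_neqO; rewrite h eqxx.
Qed.

Lemma fCC s t : p0 + s *: (O - p0) = p0 + t *: (O - p0) -> s = t.
Proof.
move/addrI => E.
have : (s - t) *: (O - p0) = 0 by rewrite scalerBl E subrr.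
case/scale_eq0 => [/eqP|h]; first by rewrite subr_eq0 => /eqP.
by move: O_neq_p0; rewrite -opprB h oppr0 eqxx.
Qed.

Lemma fAB s j t : 0 <= s < 1 -> (k < j < m)%N -> 0 <= t <= 1 ->
  O + s *: (pk - O) = on_edge P j t -> False.
Proof.
move=> /andP[s0 s1] /andP[hj1 hj2] ht E.
case: (eqVneq s 0) => [s00|sn0].
  by apply: HO; move: E; rewrite s00 scale0r addr0 => ->; apply: oe_curve.
have sp : 0 < s by rewrite lt_def sn0 s0.
have E2 : on_edge P j t - O = s *: (pk - O) by rewrite -E addrAC subrr add0r.
have := Hray (oe_curve hj2 ht) (vP_curve _) sp E2.
move=> E3; rewrite E3 in E.
have : (1 - s) *: (pk - O) = 0 by vec_lra E.
case/scale_eq0 => [h|h]; first by lra.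
by move: pk_neqO; rewrite h eqxx.
Qed.

Lemma fAC s t : 0 <= s < 1 -> 0 <= t < 1 ->
  O + s *: (pk - O) = p0 + t *: (O - p0) -> False.
Proof.
move=> /andP[s0 s1] /andP[t0 t1] E.
have E1 : s *: (pk - O) = (1 - t) *: (p0 - O) by vec_lra E.
case: (eqVneq s 0) => [s00|sn0].
  move: E1; rewrite s00 scale0r => /esym /scale_eq0 [h|h]; first by lra.
  by move: O_neq_p0; rewrite h eqxx.
have sp : 0 < s by rewrite lt_def sn0 s0.
have E2 := scale_solve sn0 E1.
have hl : 0 < (1 - t) / s by apply: divr_gt0; lra.
have := Hray (vP_curve _) p0_curve hl E2.
rewrite -p0E => /vtx_inj.
by move=> /(_ hk m0).
Qed.

Lemma fBC j s t : (k < j < m)%N -> 0 <= s < 1 -> 0 <= t < 1 ->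
  on_edge P j s = p0 + t *: (O - p0) -> False.
Proof.
move=> /andP[hj1 hj2] hs /andP[t0 t1] E.
have E1 : on_edge P j s - O = (1 - t) *: (p0 - O) by vec_lra E.
have hl : 0 < 1 - t by lra.
have E2 := Hray (oe_curve hj2 (half_le hs)) p0_curve hl E1.
rewrite p0_oe in E2.
have h0 : 0 <= (0:R) < 1 by rewrite lexx ltr01.
have [e _] := injP hj2 m0 hs h0 E2.
by move: hj1; rewrite e.
Qed.

Lemma simpleR : simple_polygon (RR k).
Proof.
split; first by rewrite sizeRR.
have cls : forall i, (i < size (RR k))%N -> [\/ i = 0%N, (0 < i < m - k)%N | i = (m - k)%N].
  move=> i; rewrite sizeRR // ltnS => hi.
  case: (posnP i) => [->|h1]; first by apply: Or31.
  case: (ltnP i (m - k)) => h2; first by apply: Or32; apply/andP; split.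
  by apply: Or33; apply/eqP; rewrite eqn_leq hi h2.
have midj : forall i, (0 < i < m - k)%N -> (k < k + i < m)%N.
  by move=> i /andP[h1 h2]; apply/andP; split; clear -h1 h2 hk1; lia.
have oeRm : forall i s, (0 < i < m - k)%N -> on_edge (RR k) i s = on_edge P (k + i) s.
  by move=> i s /andP[h1 h2]; apply: oeRmid.
move=> i j s t hi hj hs ht.
case: (cls i hi) => [->|hi'|->]; case: (cls j hj) => [->|hj'|->].
- by rewrite !oeR0 // => /fAA.
- by rewrite oeR0 // (oeRm j t hj') => E; exfalso; apply: (fAB hs (midj _ hj') (half_le ht) E).
- by rewrite oeR0 // oeRlast // => E; exfalso; apply: (fAC hs ht E).
- by rewrite oeR0 // (oeRm i s hi') => E; exfalso; apply: (fAB ht (midj _ hi') (half_le hs) (esym E)).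
- rewrite (oeRm i s hi') (oeRm j t hj') => E; case/andP: (midj _ hi') => _ h1; case/andP: (midj _ hj') => _ h2.
  have [e ->] := injP h1 h2 hs ht E; split => //.
  by move/eqP: e; rewrite eqn_add2l => /eqP.
- by rewrite (oeRm i s hi') (oeRlast t hk1) => E; exfalso; apply: (fBC (midj _ hi') hs ht E).
- by rewrite oeR0 // oeRlast // => E; exfalso; apply: (fAC ht hs (esym E)).
- by rewrite (oeRm j t hj') (oeRlast s hk1) => E; exfalso; apply: (fBC (midj _ hj') ht hs (esym E)).
- by rewrite !oeRlast // => /fCC.
Qed.

End SimpleR.
Lemma oe1_mod j : on_edge P j 1 = on_edge P (j.+1 %% m) 0.
Proof. by rewrite on_edge1 on_edge0 vtx_mod. Qed.

Lemma tri_ray (a b : V) (l1 l2 l3 : R) : l1 + l2 + l3 = 1 -> l2 + l3 != 0 ->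
  (l1 *: O + l2 *: b + l3 *: a) - O = (l2 + l3) *: ((a + (l2 / (l2 + l3)) *: (b - a)) - O).
Proof.
move=> hs hn; have -> : l1 = 1 - l2 - l3 by lra.
by apply/rowP => c; rewrite !mxE; field.
Qed.

Lemma frac_in (l2 l3 : R) : 0 <= l2 -> 0 <= l3 -> l2 + l3 != 0 -> 0 <= l2 / (l2 + l3) <= 1.
Proof.
move=> h2 h3 hn; have hp : 0 < l2 + l3 by rewrite lt_def hn; lra.
apply/andP; split; first by apply: divr_ge0; lra.
by rewrite ler_pdivrMr // mul1r; lra.
Qed.

Lemma deltaK k : (k.+3 <= m)%N -> delta_move (RR k.+1) (RR k).
Proof.
move=> hk.
have hk1 : (k.+1 < m)%N by apply: ltnW.
have hk2 : (k.+2 < m)%N by [].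
pose b := vtx P k.+2; pose c := vtx P k.+1.
exists O, b, c, (drop k.+3 P ++ [:: p0]); split; [|split].
- by rewrite /RR (drop_nth 0 hk2) /b vtx_small.
- by rewrite /RR (drop_nth 0 hk1) (drop_nth 0 hk2) /b /c !vtx_small.
move=> x [l1 [l2 [l3 [h1 [h2 [h3 [hs ->]]]]]]] hon.
case: (eqVneq (l2 + l3) 0) => hn.
  have e2 : l2 = 0 by lra. have e3 : l3 = 0 by lra. have e1 : l1 = 1 by lra.
  by exists 0; rewrite lexx ler01 e1 e2 e3 !scale0r !addr0 scale1r.
have hp : 0 < l2 + l3 by rewrite lt_def hn; lra.
have hr := frac_in h2 h3 hn.
set r := l2 / (l2 + l3) in hr.
have ER := tri_ray c b hs hn; rewrite -/r in ER.
have Ey : c + r *: (b - c) = on_edge P k.+1 r by [].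
rewrite Ey in ER.
have ycurve := oe_curve hk1 hr.
set X := l1 *: O + l2 *: b + l3 *: c in hon ER *.
have h00 : 0 <= (0:R) < 1 by rewrite lexx ltr01.
case: (onR hk1 hon) => [[s [hs' Ex]]|[j [s [hj hs' Ex]]]|[s [hs' Ex]]].
- by exists s; rewrite Ex.
- have xc : on_curve P X by rewrite Ex; apply: oe_curve (proj2 (andP hj)) hs'.
  have Exy := Hray xc ycurve hp ER.
  case/andP: hr => r0; rewrite le_eqVlt => /orP[/eqP r1|r1].
    by exists 1; rewrite lexx ler01 Exy r1 on_edge1 scale1r addrC subrK.
  have hr' : 0 <= r < 1 by rewrite r0 r1.
  case/andP: hj => hj1 hj2.
  move: Exy; rewrite Ex => E'.
  case/andP: hs' => s0; rewrite le_eqVlt => /orP[/eqP s1|s1].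
    rewrite s1 oe1_mod in E'.
    have [e _] := injP (ltn_pmod _ m0) hk1 h00 hr' E'.
    move: e; case: (ltngtP j.+1 m) => hjm.
    + by rewrite modn_small // => [[e]]; clear -hj1 e; lia.
    + by clear -hj2 hjm; lia.
    + by rewrite hjm modnn.
  have hs'' : 0 <= s < 1 by rewrite s0 s1.
  have [e _] := injP hj2 hk1 hs'' hr' E'.
  by move: hj1; rewrite e ltnn.
- case/andP: hs' => s0; rewrite le_eqVlt => /orP[/eqP s1|s1].
    by exists 0; rewrite lexx ler01 Ex s1 scale1r scale0r addr0 addrC subrK.
  have E1 : X - O = (1 - s) *: (p0 - O) by vec_lra Ex.
  rewrite E1 in ER.
  have E2 := scale_solve hn (esym ER).
  have hl : 0 < (1 - s) / (l2 + l3) by apply: divr_gt0; lra.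
  have := Hray ycurve p0_curve hl E2.
  rewrite p0_oe.
  case/andP: hr => r0; rewrite le_eqVlt => /orP[/eqP r1|r1].
    rewrite r1 oe1_mod => E3.
    have [e _] := injP (ltn_pmod _ m0) m0 h00 h00 E3.
    by move: e; rewrite modn_small.
  have hr' : 0 <= r < 1 by rewrite r0 r1.
  by move=> E3; have [e _] := injP hk1 m0 hr' h00 E3.
Qed.

Definition Q0 := p0 :: O :: behead P.

Lemma P_split : P = p0 :: nth 0 P 1 :: drop 2 P.
Proof.
rewrite /p0 -(drop_nth 0 m2); have := m0; case E: P => [//|a s] _ /=; by rewrite drop0.
Qed.

Lemma delta0 : delta_move P Q0.
Proof.
exists p0, (nth 0 P 1), O, (drop 2 P); split; [exact: P_split|split].
  by rewrite /Q0 -drop1 (drop_nth 0 m2).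
move=> x [l1 [l2 [l3 [h1 [h2 [h3 [hs ->]]]]]]] hon.
case: (eqVneq (l1 + l2) 0) => hn.
  have e1 : l1 = 0 by lra. have e2 : l2 = 0 by lra. have e3 : l3 = 1 by lra.
  by exfalso; apply: HO; move: hon; rewrite e1 e2 e3 !scale0r !add0r scale1r.
have hp : 0 < l1 + l2 by rewrite lt_def hn; lra.
have hr : 0 <= l2 / (l1 + l2) <= 1 by rewrite addrC in hn *; apply: frac_in.
have Ey : on_edge P 0 (l2 / (l1 + l2)) = p0 + (l2 / (l1 + l2)) *: (nth 0 P 1 - p0).
  by rewrite /on_edge p0E vtx_small // m2.
have ER : l1 *: p0 + l2 *: nth 0 P 1 + l3 *: O - O =
          (l1 + l2) *: (on_edge P 0 (l2 / (l1 + l2)) - O).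
  rewrite Ey; have -> : l3 = 1 - l1 - l2 by lra.
  by apply/rowP => ci; rewrite !mxE; field.
have := Hray hon (oe_curve m0 hr) hp ER.
by move=> ->; exists (l2 / (l1 + l2)); rewrite Ey.
Qed.

Lemma rotQ0 : rot 1 Q0 = RR 0.
Proof. by rewrite /Q0 /RR /rot /= ?drop0 ?take0 ?drop1. Qed.

Lemma simpleQ0 : simple_polygon Q0.
Proof.
have h : simple_polygon (RR 0) by apply: simpleR; exact: m2.
rewrite -(rotK 1 Q0) rotQ0 /rotr; apply: simple_rot => //.
by rewrite leq_subr.
Qed.

Lemma chain k : (k.+2 <= m)%N -> clos_refl_sym_trans _ (@poly_step R) P (RR k).
Proof.
elim: k => [_|k IH hk].
  apply: (rst_trans _ _ _ Q0).
    apply: rst_step; split; [exact: HP|split; [exact: simpleQ0|]].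
    by right; left; exact: delta0.
  apply: rst_step; split; [exact: simpleQ0|split; [apply: simpleR; exact: m2|]].
  by left; exists 1%N; rewrite rotQ0.
apply: (rst_trans _ _ _ (RR k)); first by apply: IH; apply: ltnW.
apply: rst_step; split; [apply: simpleR; apply: ltnW|split; [exact: simpleR|]] => //.
by right; right; apply: deltaK.
Qed.

Theorem cone_unknot : is_unknot P.
Proof.
exists (RR (m - 2)); split; [|split].
- rewrite sizeRR; last by have := m2; clear; lia.
  by have := m2; clear; move=> h; congr _.+1; lia.
- by apply: simpleR; have := m2; clear; lia.
- by apply: chain; have := m2; clear; lia.
Qed.
End Cone.


Theorem theorem2p4 (R : realType) (n : nat) (w : 'I_n -> 'rV[R]_3) :
  \sum_(k < n) proj_xy (w k) = 0 ->
  exists sigma : 'S_n,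
    forall (c : 'rV[R]_2) (h : 'I_n -> R),
      simple_polygon (realization (fun k => proj_xy (w k)) sigma c h) ->
      is_unknot (realization (fun k => proj_xy (w k)) sigma c h).
Proof.
case: n w => [|n'] w hsum.
  exists 1%g => c h [hs _]; by move: hs; rewrite /realization size_map size_enum_ord.
set n := n'.+1 in w hsum *.
pose u := fun k => proj_xy (w k).
pose U := fun k : 'I_n => (u k 0 0, u k 0 1).
pose leI := fun i j : 'I_n => le (U i) (U j).
have tot : ssrbool.total leI by move=> i j; apply: le_tot.
have tr : ssrbool.transitive leI by move=> j i k; apply: le_trans3.
have rf : ssrbool.reflexive leI by move=> i; rewrite /leI /le eqxx cross_aa lexx orbT.
pose s := sort leI (enum 'I_n).
have ss : sorted leI s := sort_sorted tot _.
have us : uniq s by rewrite (perm_uniq (permEl (perm_sort _ _))) enum_uniq.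
have zs : size s = n by rewrite size_sort size_enum_ord.
pose f := fun i : 'I_n => nth ord0 s i.
have finj : injective f.
  move=> i j; rewrite /f => /eqP; rewrite nth_uniq ?zs // => /eqP; apply: val_inj.
pose sigma := perm finj.
exists sigma => c h HS.
have sE : forall i : 'I_n, sigma i = nth ord0 s i by move=> i; rewrite permE.
pose d := fun k : nat => U (nth ord0 s k).
have Hsort : forall i j, (i <= j < n)%N -> le (d i) (d j).
  move=> i j /andP[hij hj]; have hi : (i < n)%N by apply: leq_ltn_trans hij hj.
  by apply: (sorted_leq_nth tr rf ord0 ss); rewrite ?inE ?zs.
have dE : forall i : 'I_n, d i = U (sigma i) by move=> i; rewrite sE.
have Hsum : forall k : 'I_2, \sum_(0 <= i < n) (u (nth ord0 s i)) 0 k = 0.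
  move=> k; rewrite big_mkord.
  rewrite (eq_bigr (fun i => u (sigma i) 0 k)); last by move=> i _; rewrite sE.
  rewrite -(reindex_inj (h := sigma) (P := predT) (F := fun i => u i 0 k)); last exact: perm_inj.
  by rewrite -summxE hsum mxE.
have Hsum1 : \sum_(0 <= i < n) (d i).1 = 0 by apply: Hsum.
have Hsum2 : \sum_(0 <= i < n) (d i).2 = 0 by apply: Hsum.
pose c0 := (c 0 0, c 0 1).
have [P [notin ray]] := plane_main c0 Hsum1 Hsum2 Hsort.
set L := realization _ sigma c h in HS *.
have zL : size L = n by rewrite size_map size_enum_ord.
have i0 : (inord 0 : 'I_2) = 0 by apply: val_inj; rewrite /= inordK.
have i1 : (inord 1 : 'I_2) = 1 by apply: val_inj; rewrite /= inordK.
have coord : forall i, (i < n)%N ->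
    (vtx L i) 0 0 = (q c0 d i).1 /\ (vtx L i) 0 1 = (q c0 d i).2.
  move=> i hi; rewrite vtx_small ?zL // (nth_map ord0) ?size_enum_ord //.
  have hk := nth_enum_ord ord0 hi.
  move: (nth ord0 (enum 'I_n) i) hk => k hk.
  rewrite /realization_vertex !mxE /= ?i0 ?i1 ?mxE ?summxE.
  have E : forall kk : 'I_2, \sum_(k0 < n | (k0 < k)%N) proj_xy (w (sigma k0)) 0 kk =
      \sum_(0 <= i2 < i) u (nth ord0 s i2) 0 kk.
    move=> kk; rewrite (@big_nat_widen _ _ _ 0 i n) ?(ltnW hi) // big_mkord.
    by apply: eq_big => [l|l _]; [rewrite hk|rewrite sE].
  by rewrite !E.
have coordS : forall i, (i <= n)%N ->
    (vtx L i) 0 0 = (q c0 d i).1 /\ (vtx L i) 0 1 = (q c0 d i).2.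
  move=> i; rewrite leq_eqVlt => /orP[/eqP ->|hi]; last exact: coord.
  have -> : vtx L n = vtx L 0 by rewrite /vtx zL modnn mod0n.
  by rewrite (qn c0 Hsum1 Hsum2); apply: coord.
have oecoord : forall i t, (i < n)%N ->
    (on_edge L i t) 0 0 = (cp c0 d i t).1 /\ (on_edge L i t) 0 1 = (cp c0 d i t).2.
  move=> i t hi; rewrite /on_edge !mxE.
  have [a1 a2] := coord i hi; have [b1 b2] := coordS i.+1 hi.
  rewrite a1 a2 b1 b2 qS /cp /=; split; ring.
have curve : forall x, on_curve L x -> exists i t, [/\ (i < n)%N, 0 <= t <= 1,
    x 0 0 = (cp c0 d i t).1 & x 0 1 = (cp c0 d i t).2].
  move=> x [i [t [hi [ht ->]]]]; rewrite zL in hi.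
  by have [e1 e2] := oecoord i t hi; exists i, t; split.
pose O := \row_(j < 3) (if (j == 0 :> nat) then P.1 else if (j == 1 :> nat) then P.2 else 0).
have O0 : O 0 0 = P.1 by rewrite mxE.
have O1 : O 0 1 = P.2 by rewrite mxE.
have HO : ~ on_curve L O.
  move=> /curve [i [t [hi ht e1 e2]]].
  by apply: (notin i t hi ht); apply: pair_eq; rewrite -?e1 -?e2.
have Hray : forall x y (l : R), on_curve L x -> on_curve L y -> 0 < l ->
    x - O = l *: (y - O) -> x = y.
  move=> x y l hx hy hl E.
  have [i [a [hi ha x1 x2]]] := curve x hx.
  have [j [b [hj hb y1 y2]]] := curve y hy.
  have E0 := congr1 (fun v : 'rV[R]_3 => v 0 0) E; have E1 := congr1 (fun v : 'rV[R]_3 => v 0 1) E.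
  rewrite /= !mxE /= -/O ?O0 ?O1 in E0 E1.
  have Hr : sub (cp c0 d i a) P = (l * (sub (cp c0 d j b) P).1, l * (sub (cp c0 d j b) P).2).
    by apply: pair_eq; rewrite /sub; cbn [fst snd]; rewrite -?x1 -?x2 -?y1 -?y2.
  have Ec := ray i j a b l hi hj ha hb hl Hr.
  have ex1 : x 0 0 = y 0 0 by rewrite x1 y1 Ec.
  have ex2 : x 0 1 = y 0 1 by rewrite x2 y2 Ec.
  have hl1 : l = 1.
    case: (eqVneq l 1) => // hl1; exfalso.
    have hl1' : 1 - l != 0 by rewrite subr_eq0 eq_sym.
    have f1 : (1 - l) * (y 0 0 - P.1) = 0 by rewrite ex1 in E0; rewrite mulrBl mul1r -E0 subrr.
    have f2 : (1 - l) * (y 0 1 - P.2) = 0 by rewrite ex2 in E1; rewrite mulrBl mul1r -E1 subrr.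
    move/eqP: f1; rewrite mulf_eq0 (negbTE hl1') /= subr_eq0 => /eqP f1.
    move/eqP: f2; rewrite mulf_eq0 (negbTE hl1') /= subr_eq0 => /eqP f2.
    by apply: (notin j b hj hb); apply: pair_eq; rewrite -?y1 -?y2.
  by move: E; rewrite hl1 scale1r => /addIr.
exact: (cone_unknot HS HO Hray).
Qed.
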